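(* Let $M$ be a binary matroid and let $d=\dim P(M)$. If the base graph $G(M)$ has a vertex with exactly $d$ neighbours, then $P(M)$ is indecomposable.
   Context: A matroid is binary if it is representable over $\mathbb{F}_2$. For a matroid $N$ on $E=\{1,\dots,n\}$, $P(N)=\mathrm{conv}\{\sum_{i\in B}e_i : B \text{ a base of } N\}\subset\mathbb{R}^n$. The base graph $G(M)$ has the bases of $M$ as vertices, two bases adjacent iff their symmetric difference has exactly two elements (it is the 1-skeleton of $P(M)$). A matroid base polytope decomposition of $P(M)$ is an expression $P(M)=\bigcup_{i=1}^t P(M_i)$ with each $M_i$ a matroid on $E$ and $P(M_i)\cap P(M_j)$ a face of both $P(M_i)$ and $P(M_j)$ for all $i\neq j$. $P(M)$ is decomposable if it has such a decomposition with $t\ge 2$ and every $P(M_i)\neq P(M)$, and indecomposable otherwise. *)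

(* Defs.v *)
From HB Require Import structures.
From mathcomp Require Import all_boot all_order all_algebra.
Set Implicit Arguments. Unset Strict Implicit. Unset Printing Implicit Defensive.
Import Order.TTheory GRing.Theory Num.Theory.
Local Open Scope ring_scope.

Definition is_matroid (n : nat) (Bs : {set {set 'I_n}}) : Prop :=
  Bs != set0 /\
  forall B1 B2, B1 \in Bs -> B2 \in Bs -> forall x, x \in B1 :\: B2 ->
    exists2 y, y \in B2 :\: B1 & (y |: (B1 :\ x)) \in Bs.

Definition col_indep (m n : nat) (A : 'M['F_2]_(m, n)) (B : {set 'I_n}) : Prop :=
  forall c : 'cV['F_2]_n, (forall j, j \notin B -> c j 0 = 0) ->
    A *m c = 0 -> c = 0.

Definition binary (n : nat) (Bs : {set {set 'I_n}}) : Prop :=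
  exists m (A : 'M['F_2]_(m, n)),
    forall B : {set 'I_n}, B \in Bs <-> (col_indep A B /\ #|B| = \rank A).

Definition chi (R : realFieldType) (n : nat) (B : {set 'I_n}) : 'rV[R]_n :=
  \row_j (if j \in B then 1 else 0).

Definition base_polytope (R : realFieldType) (n : nat) (Bs : {set {set 'I_n}})
  (x : 'rV[R]_n) : Prop :=
  exists lam : {set 'I_n} -> R,
    [/\ forall B, 0 <= lam B,
        forall B, B \notin Bs -> lam B = 0,
        \sum_B lam B = 1
      & x = \sum_B lam B *: chi R B].

Arguments base_polytope R [n] Bs x.

Definition dotv (R : realFieldType) (n : nat) (a x : 'rV[R]_n) : R :=
  \sum_j a 0 j * x 0 j.

(* F is a face of P: the intersection of P with a supporting hyperplane
   (a = 0 allowed, giving P itself (b = 0) and the empty face (b = 1)). *)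
Definition is_face (R : realFieldType) (n : nat) (P F : 'rV[R]_n -> Prop) : Prop :=
  exists (a : 'rV[R]_n) (b : R),
    (forall y, P y -> dotv a y <= b) /\
    (forall x, F x <-> (P x /\ dotv a x = b)).

Definition aff_indep_pts (R : realFieldType) (n : nat) (P : 'rV[R]_n -> Prop)
  (k : nat) : Prop :=
  exists p : 'I_k.+1 -> 'rV[R]_n,
    (forall i, P (p i)) /\
    row_free (\matrix_(i < k) (p (lift ord0 i) - p ord0)).

Definition poly_dim (R : realFieldType) (n : nat) (P : 'rV[R]_n -> Prop)
  (d : nat) : Prop :=
  aff_indep_pts P d /\ ~ aff_indep_pts P d.+1.

Definition symdiff (n : nat) (A B : {set 'I_n}) : {set 'I_n} :=
  (A :\: B) :|: (B :\: A).

Definition base_graph_degree (n : nat) (Bs : {set {set 'I_n}}) (B : {set 'I_n})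
  : nat :=
  #|[set B' in Bs | #|symdiff B B'| == 2]|.

Definition decomposable (R : realFieldType) (n : nat) (Bs : {set {set 'I_n}}) : Prop :=
  exists (t : nat) (Ms : 'I_t -> {set {set 'I_n}}),
    [/\ (2 <= t)%N,
        forall i, is_matroid (Ms i),
        forall x, base_polytope R Bs x <-> exists i, base_polytope R (Ms i) x,
        forall i, ~ (forall x, base_polytope R (Ms i) x <-> base_polytope R Bs x)
      & forall i j, i != j ->
          is_face (base_polytope R (Ms i))
                  (fun x => base_polytope R (Ms i) x /\ base_polytope R (Ms j) x) /\
          is_face (base_polytope R (Ms j))
                  (fun x => base_polytope R (Ms i) x /\ base_polytope R (Ms j) x)].

Arguments decomposable R [n] Bs.

Definition indecomposable (R : realFieldType) (n : nat) (Bs : {set {set 'I_n}}) : Prop :=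
  ~ decomposable R Bs.

Arguments indecomposable R [n] Bs.

(* Main.v *)
Require Import Defs.
From HB Require Import structures.
From mathcomp Require Import all_boot all_order all_algebra.
Import Order.TTheory GRing.Theory Num.Theory.
From Stdlib Require Import ClassicalEpsilon Classical.

Module Helpers.
Set Implicit Arguments. Unset Strict Implicit. Unset Printing Implicit Defensive.
Local Open Scope ring_scope.

Section Binary.
Variables (m n : nat) (A : 'M['F_2]_(m, n)).

Definition suppo (B : {set 'I_n}) (c : 'cV['F_2]_n) := forall j, j \notin B -> c j 0 = 0.

Lemma coords (B : {set 'I_n}) : col_indep A B -> #|B| = \rank A ->
  forall z, exists2 c, suppo B c & A *m c = col z A.
Proof.
move=> ci cB z.
pose Sel : 'M['F_2]_(n, #|B|) := \matrix_(j, i) ((j == enum_val i)%:R).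
have selsupp : forall (w : 'cV_#|B|), suppo B (Sel *m w).
  move=> w j jB; rewrite mxE big1 // => i _; rewrite mxE.
  case: eqP => [ej|]; last by rewrite mul0r.
  by move: jB; rewrite ej enum_valP.
have rf : row_free (A *m Sel)^T.
  apply: inj_row_free => v.
  move=> /(congr1 trmx); rewrite trmx_mul trmxK trmx0 -mulmxA => H.
  have := ci _ (selsupp _) H => H2.
  apply/rowP => i; rewrite mxE.
  move/matrixP: H2 => /(_ (enum_val i) 0); rewrite !mxE => <-.
  rewrite (bigD1 i) //= big1 ?addr0.
    by rewrite !mxE eqxx mul1r.
  move=> k ki; rewrite !mxE; case: eqP=> [|_]; last by rewrite mul0r.
  by move/enum_val_inj => ik; move: ki; rewrite ik eqxx.
have rk : \rank (A *m Sel)^T = \rank A^T.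
  by rewrite [RHS]mxrank_tr -cB; apply/eqP.
have sub1 : ((A *m Sel)^T <= A^T)%MS by rewrite trmx_mul submxMl.
have sub2 : (A^T <= (A *m Sel)^T)%MS.
  by rewrite -(geq_leqif (mxrank_leqif_sup sub1)) rk.
have : (row z A^T <= (A *m Sel)^T)%MS by apply: submx_trans sub2; apply: row_sub.
case/submxP => D HD.
exists (Sel *m D^T); first exact: selsupp.
by rewrite mulmxA -[A *m Sel]trmxK -trmx_mul -HD tr_row trmxK.
Qed.
End Binary.

Definition swap n (B : {set 'I_n}) (x y : 'I_n) := y |: (B :\ x).

Section Binary2.
Variables (m n : nat) (A : 'M['F_2]_(m, n)).
Definition bbase (B : {set 'I_n}) := col_indep A B /\ #|B| = \rank A.

Lemma mul_sum_col (c : 'cV['F_2]_n) : A *m c = \sum_z c z 0 *: col z A.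
Proof.
apply/matrixP => i j; rewrite !mxE summxE; apply: eq_bigr => k _.
by rewrite !mxE (ord1 j) mulrC.
Qed.

Lemma coord_uniq B c c' : col_indep A B -> suppo B c -> suppo B c' ->
  A *m c = A *m c' -> c = c'.
Proof.
move=> ci sc sc' e; apply/eqP; rewrite -subr_eq0; apply/eqP; apply: ci.
  by move=> j jB; rewrite !mxE sc // sc' // subrr.
by rewrite mulmxBr e subrr.
Qed.

Lemma exch B u z c : bbase B -> u \in B -> z \notin B -> suppo B c ->
  A *m c = col z A -> c u 0 != 0 -> bbase (swap B u z).
Proof.
move=> [ci cB] uB zB sc Ac cu; split; last first.
  rewrite /swap cardsU1 !inE negb_and zB orbT /= -cB (cardsD1 u B) uB.
  by [].
move=> e se Ae.
pose a := e z 0.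
pose f := e - a *: delta_mx z 0 + a *: c.
have Af : A *m f = 0.
  rewrite /f mulmxDr mulmxBr Ae -!scalemxAr Ac -colE.
  by rewrite sub0r addNr.
have sf : suppo B f.
  move=> j jB; rewrite /f !mxE (sc j jB) mulr0 addr0.
  case: (eqVneq j z) => [->|jz]; first by rewrite !eqxx mulr1 subrr.
  rewrite /= mulr0 subr0 se // /swap !inE negb_or jz /=.
  by rewrite negb_and jB orbT.
have f0 := ci f sf Af.
have uz : u != z by apply: contraNneq zB => <-.
have eu : e u 0 = 0 by apply: se; rewrite /swap !inE eqxx (negbTE uz).
have a0 : a = 0.
  move/matrixP: f0 => /(_ u 0); rewrite /f !mxE eu (negbTE uz) mulr0 subrr add0r.
  by move/eqP; rewrite mulf_eq0 (negbTE cu) orbF => /eqP.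
by move: f0; rewrite /f a0 !scale0r subr0 addr0.
Qed.

Lemma sea B1 B2 x : bbase B1 -> bbase B2 -> x \in B1 :\: B2 ->
  exists2 y, y \in B2 :\: B1 & bbase (swap B1 x y) /\ bbase (swap B2 y x).
Proof.
move=> b1 b2; rewrite inE => /andP [xB2 xB1].
have [d sd Ad] := coords b2.1 b2.2 x.
have H : forall z, exists c, suppo B1 c /\ A *m c = col z A.
  by move=> z; have [c ? ?] := coords b1.1 b1.2 z; exists c.
pose cf z := proj1_sig (constructive_indefinite_description _ (H z)).
have cfP z : suppo B1 (cf z) /\ A *m cf z = col z A :=
  proj2_sig (constructive_indefinite_description _ (H z)).
have cfB1 z : z \in B1 -> cf z = delta_mx z 0.
  move=> zB; apply: (coord_uniq b1.1 (cfP z).1).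
    by move=> j jB; rewrite mxE; case: eqP => // ej; move: jB; rewrite ej zB.
  by rewrite (cfP z).2 colE.
pose g := \sum_z d z 0 *: cf z.
have gx : g = delta_mx x 0.
  apply: (coord_uniq b1.1).
  - move=> j jB; rewrite /g summxE big1 // => z _; rewrite mxE (cfP z).1 //.
    by rewrite mulr0.
  - by move=> j jB; rewrite mxE; case: eqP => // ej; move: jB; rewrite ej xB1.
  rewrite /g mulmx_sumr -colE -Ad mul_sum_col; apply: eq_bigr => z _.
  by rewrite -scalemxAr (cfP z).2.
have : g x 0 != 0 by rewrite gx mxE !eqxx oner_neq0.
rewrite /g summxE => /eqP.
case: (pickP (fun z => d z 0 * cf z x 0 != 0)) => [y Hy _|H0]; last first.
  move=> Hn; exfalso; apply: Hn; rewrite big1 // => z _.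
  by rewrite mxE; apply/eqP/negbFE; exact: (H0 z).
move: Hy; rewrite mulf_eq0 negb_or => /andP [dy cy].
have yB2 : y \in B2 by apply: contraNT dy => /sd ->.
have yB1 : y \notin B1.
  apply: contra cy => /cfB1 ->; rewrite mxE eqxx andbT.
  have xy : x != y by apply: contraNneq xB2 => ->.
  by rewrite (negbTE xy).
exists y; first by rewrite inE yB1.
split.
  exact: exch b1 xB1 yB1 (cfP y).1 (cfP y).2 cy.
exact: exch b2 yB2 xB2 sd Ad dy.
Qed.
End Binary2.
Set Implicit Arguments. Unset Strict Implicit. Unset Printing Implicit Defensive.
Local Open Scope ring_scope.

Section Chi.
Variables (R : realFieldType) (n : nat).
Definition ee (z : 'I_n) : 'rV[R]_n := chi R [set z].

Lemma chi_swap (B : {set 'I_n}) x y : x \in B -> y \notin B ->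
  chi R (swap B x y) = chi R B - ee x + ee y.
Proof.
move=> xB yB; apply/rowP => j; rewrite !mxE /swap !inE.
have yx : (y == x) = false by apply: contraNF yB => /eqP ->.
case: (eqVneq j y) => [->|jy] /=; first by rewrite (negbTE yB) yx subr0 add0r.
rewrite addr0; case: (eqVneq j x) => [->|jx] /=; first by rewrite xB subrr.
by rewrite subr0.
Qed.

Lemma swap_inj (B : {set 'I_n}) x y x' y' : x \in B -> y \notin B -> x' \in B -> y' \notin B ->
  swap B x y = swap B x' y' -> x = x' /\ y = y'.
Proof.
move=> xB yB xB' yB' e.
have yx : y != x by apply: contraNneq yB => ->.
have yx' : y' != x' by apply: contraNneq yB' => ->.
split.
  apply/eqP; apply/negPn/negP => xx.
  have : x \in swap B x' y' by rewrite /swap !inE eq_sym xx xB orbT.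
  by rewrite -e /swap !inE eqxx /= orbF eq_sym (negbTE yx).
have : y \in swap B x' y' by rewrite -e /swap !inE eqxx.
rewrite /swap !inE => /orP [/eqP //|/andP [_ yB2]].
by move: yB; rewrite yB2.
Qed.
End Chi.
Set Implicit Arguments. Unset Strict Implicit. Unset Printing Implicit Defensive.
Local Open Scope ring_scope.

Lemma ident (V : zmodType) (a c p q : V) : a - c = (a - p + q - c) + (c - q + p - c).
Proof. by rewrite -!addrA addKr addNKr addKr. Qed.

Lemma chi_in_poly (R : realFieldType) n (S : {set {set 'I_n}}) (B : {set 'I_n}) :
  base_polytope R S (chi R B) -> B \in S.
Proof.
move=> [lam [l0 lS l1 e]].
have comp : forall j, chi R B 0 j = \sum_B' lam B' * chi R B' 0 j.
  by move=> j; rewrite {1}e summxE; apply: eq_bigr => B' _; rewrite mxE.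
have chi01 : forall (C : {set 'I_n}) j, chi R C 0 j = if j \in C then 1 else 0.
  by move=> C j; rewrite mxE.
case: (pickP (fun B' => lam B' != 0)) => [B' lB'|H0]; last first.
  have : \sum_B' lam B' = 0 by apply: big1 => B' _; apply/eqP/negbFE; exact: H0 B'.
  by rewrite l1 => /eqP; rewrite oner_eq0.
suff -> : B = B'.
  by case: (boolP (B' \in S)) => // nS; move: lB'; rewrite lS // eqxx.
apply/setP => j; case jB: (j \in B).
  have H : \sum_B'' lam B'' * (1 - chi R B'' 0 j) = 0.
    rewrite (eq_bigr (fun B'' => lam B'' - lam B'' * chi R B'' 0 j)); last first.
      by move=> B'' _; rewrite mulrBr mulr1.
    by rewrite sumrB l1 -comp chi01 jB subrr.
  have nn : forall C, true -> 0 <= lam C * (1 - chi R C 0 j).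
    by move=> C _; rewrite chi01; apply: mulr_ge0 => //; case: (j \in C); rewrite ?subrr ?subr0.
  have := psumr_eq0P nn H (i:=B') isT.
  rewrite chi01; case: (j \in B') => //; rewrite subr0 mulr1 => le.
  by move: lB'; rewrite le eqxx.
have H : \sum_B'' lam B'' * chi R B'' 0 j = 0 by rewrite -comp chi01 jB.
have nn : forall C, true -> 0 <= lam C * chi R C 0 j.
  by move=> C _; rewrite chi01; apply: mulr_ge0 => //; case: (j \in C).
have := psumr_eq0P nn H (i:=B') isT.
rewrite chi01; case: (j \in B') => //; rewrite mulr1 => le.
by move: lB'; rewrite le eqxx.
Qed.

Section Main.
Variables (R : realFieldType) (n : nat) (Bs : {set {set 'I_n}}) (m : nat)
  (A : 'M['F_2]_(m,n)) (B0 : {set 'I_n}).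
Hypotheses (Hmat : is_matroid Bs) (Hbin : forall B, B \in Bs <-> bbase A B)
  (B0in : B0 \in Bs).

Lemma cardM B : B \in Bs -> #|B| = #|B0|.
Proof. by move=> /Hbin [_ ->]; have /Hbin [_ ->] := B0in. Qed.

Lemma seaM B1 B2 x : B1 \in Bs -> B2 \in Bs -> x \in B1 :\: B2 ->
  exists2 y, y \in B2 :\: B1 & swap B1 x y \in Bs /\ swap B2 y x \in Bs.
Proof.
move=> /Hbin b1 /Hbin b2 xin; have [y yin [s1 s2]] := sea b1 b2 xin.
by exists y => //; split; apply/Hbin.
Qed.

Lemma cardD_eq B : B \in Bs -> #|B0 :\: B| = #|B :\: B0|.
Proof. by move=> BB; rewrite !cardsD setIC (cardM BB). Qed.

Lemma diff_ne0 B : B \in Bs -> B != B0 -> exists x, x \in B0 :\: B.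
Proof.
move=> BB nB; case: (set_0Vmem (B0 :\: B)) => [e|[x xin]]; last by exists x.
by move: nB; rewrite eq_sym eqEcard -setD_eq0 e eqxx (cardM BB) leqnn.
Qed.

Definition v := chi R B0.
Definition nb := [set B in Bs | #|symdiff B0 B| == 2%N].
Definition inspan (S : {set {set 'I_n}}) (z : 'rV[R]_n) :=
  exists a : {set 'I_n} -> R, (forall N, N \notin S -> a N = 0) /\
    z = \sum_(N in nb) a N *: (chi R N - v).

Lemma inspan0 (S : {set {set 'I_n}}) : inspan S 0.
Proof. by exists (fun _ => 0); split => //; rewrite big1 // => N _; rewrite scale0r. Qed.

Lemma inspanD (S : {set {set 'I_n}}) z1 z2 : inspan S z1 -> inspan S z2 -> inspan S (z1 + z2).
Proof.
move=> [a1 [h1 ->]] [a2 [h2 ->]]; exists (fun N => a1 N + a2 N); split.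
  by move=> N NS; rewrite h1 // h2 // addr0.
by rewrite -big_split; apply: eq_bigr => N _; rewrite scalerDl.
Qed.

Lemma inspanZ (S : {set {set 'I_n}}) c z : inspan S z -> inspan S (c *: z).
Proof.
move=> [a [h ->]]; exists (fun N => c * a N); split.
  by move=> N NS; rewrite h // mulr0.
by rewrite scaler_sumr; apply: eq_bigr => N _; rewrite scalerA.
Qed.

Lemma inspan_nb (S : {set {set 'I_n}}) N : N \in nb -> N \in S -> inspan S (chi R N - v).
Proof.
move=> Nnb NS; exists (fun M => (M == N)%:R); split.
  by move=> M MS; case: eqP => // e; move: MS; rewrite e NS.
rewrite (bigD1 N) //= eqxx scale1r big1 ?addr0 // => M /andP [_ MN].
by rewrite (negbTE MN) scale0r.
Qed.

Lemma inspan_sum (S : {set {set 'I_n}}) (I : finType) (F : I -> 'rV[R]_n) :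
  (forall i, inspan S (F i)) -> inspan S (\sum_i F i).
Proof.
move=> H; apply: (big_ind (inspan S)); [exact: inspan0|exact: inspanD|].
by move=> i _; exact: H.
Qed.

Lemma swap_nb x y : x \in B0 -> y \notin B0 -> swap B0 x y \in Bs ->
  swap B0 x y \in nb.
Proof.
move=> xB yB sB; rewrite inE sB /=.
have yx : y != x by apply: contraNneq yB => ->.
have -> : symdiff B0 (swap B0 x y) = [set x; y].
  apply/setP => j; rewrite /symdiff /swap !inE.
  case: (eqVneq j x) => [->|jx]; first by rewrite eq_sym (negbTE yx) xB.
  case: (eqVneq j y) => [->|jy]; first by rewrite (negbTE yB).
  by case: (j \in B0).
by rewrite cards2 (eq_sym x y) yx.
Qed.

Lemma chi_swap_v x y : x \in B0 -> y \notin B0 ->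
  chi R (swap B0 x y) - v = ee R y - ee R x.
Proof.
move=> xB yB; rewrite chi_swap // /v addrAC (addrAC (chi R B0)) subrr add0r.
by rewrite addrC.
Qed.

Lemma spanM B : B \in Bs -> inspan Bs (chi R B - v).
Proof.
have : forall k B, (#|B :\: B0| <= k)%N -> B \in Bs -> inspan Bs (chi R B - v).
  elim => [|k IH] B1 hk BB.
    have -> : B1 = B0.
      apply/eqP; case: (eqVneq B1 B0) => // nB.
      have [x xin] := diff_ne0 BB nB.
      by move: hk; rewrite -cardD_eq // leqn0 cards_eq0 => /eqP e; move: xin; rewrite e inE.
    by rewrite subrr; exact: inspan0.
  case: (eqVneq B1 B0) => [->|nB]; first by rewrite subrr; exact: inspan0.
  have [x xin] := diff_ne0 BB nB.
  have [y yin [s1 s2]] := seaM B0in BB xin.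
  move: xin yin; rewrite !inE => /andP [xB1 xB0] /andP [yB0 yB1].
  have e : chi R B1 - v = (chi R (swap B1 y x) - v) + (chi R (swap B0 x y) - v).
    by rewrite chi_swap // chi_swap // /v -ident.
  rewrite e; apply: inspanD; last first.
    by apply: inspan_nb => //; apply: swap_nb.
  apply: IH => //.
  have -> : swap B1 y x :\: B0 = (B1 :\: B0) :\ y.
    apply/setP => j; rewrite /swap !inE.
    case: (eqVneq j x) => [->|jx]; first by rewrite xB0 !andbF.
    by case: (j \in B0); case: (j != y).
  move: hk; rewrite (cardsD1 y (B1 :\: B0)) !inE yB0 yB1 /=.
  by [].
by move=> H BB; apply: (H _ B (leqnn _) BB).
Qed.

Lemma submxB k1 k2 (X Y : 'M[R]_(k1, n)) (C : 'M[R]_(k2, n)) :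
  (X <= C)%MS -> (Y <= C)%MS -> (X - Y <= C)%MS.
Proof. by move=> hX hY; apply: addmx_sub => //; rewrite eqmx_opp. Qed.

Definition Dm := \matrix_(k < #|nb|) (chi R (enum_val k) - v).

Lemma inspan_sub (S : {set {set 'I_n}}) z : inspan S z -> (z <= Dm)%MS.
Proof.
move=> [a [_ ->]]; apply/submxP; exists (\row_k a (enum_val k)).
rewrite mulmx_sum_row big_enum_val; apply: eq_bigr => k _.
by rewrite mxE rowK.
Qed.

Lemma poly_span z : base_polytope R Bs z -> inspan Bs (z - v).
Proof.
move=> [lam [l0 lB l1 ->]].
have -> : \sum_B lam B *: chi R B - v = \sum_B lam B *: (chi R B - v).
  rewrite [RHS](eq_bigr (fun B => lam B *: chi R B - lam B *: v)); last first.
    by move=> B _; rewrite scalerBr.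
  by rewrite sumrB -scaler_suml l1 scale1r.
apply: inspan_sum => B; case: (boolP (B \in Bs)) => BB.
  by apply: inspanZ; apply: spanM.
by rewrite lB // scale0r; exact: inspan0.
Qed.

Lemma Dm_free : aff_indep_pts (base_polytope R Bs) #|nb| -> row_free Dm.
Proof.
move=> [p [pP rf]].
set Del := \matrix_(i < #|nb|) (p (lift ord0 i) - p ord0) in rf.
have sub : (Del <= Dm)%MS.
  apply/row_subP => i; rewrite rowK.
  have -> : p (lift ord0 i) - p ord0 = (p (lift ord0 i) - v) - (p ord0 - v).
    by rewrite opprB addrA subrK.
  by apply: submxB; apply: (inspan_sub (S := Bs)); apply: poly_span.
have h1 := mxrankS sub.
move: rf; rewrite /row_free => /eqP rD.
by rewrite eqn_leq rank_leq_row -{1}rD h1.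
Qed.

Lemma indep (rf : row_free Dm) (a : {set 'I_n} -> R) :
  \sum_(N in nb) a N *: (chi R N - v) = 0 -> forall N, N \in nb -> a N = 0.
Proof.
move=> H N Nnb.
have : (\row_k a (enum_val k)) *m Dm = 0 *m Dm.
  rewrite mul0mx mulmx_sum_row -[RHS]H [RHS]big_enum_val; apply: eq_bigr => k _.
  by rewrite mxE rowK.
move/(row_free_inj rf)/rowP/(_ (enum_rank_in Nnb N)).
by rewrite !mxE enum_rankK_in.
Qed.

Lemma rank_bound (rf : row_free Dm) (T : {set {set 'I_n}}) p (W : 'M[R]_(p, n)) :
  T \subset nb -> (forall N, N \in T -> (chi R N - v <= W)%MS) -> (#|T| <= p)%N.
Proof.
move=> Tnb HW.
case: (set_0Vmem T) => [->|[N0 N0T]]; first by rewrite cards0.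
pose E := \matrix_(i < #|T|) (chi R (enum_val i) - v).
have rfE : row_free E.
  apply: inj_row_free => w Hw.
  pose a N := if N \in T then w 0 (enum_rank_in N0T N) else 0.
  have Ha : \sum_(N in nb) a N *: (chi R N - v) = 0.
    rewrite -[RHS]Hw mulmx_sum_row (big_setID T) /= (setIidPr Tnb).
    rewrite [X in _ + X]big1 ?addr0; last first.
      by move=> N; rewrite !inE /a => /andP [/negbTE -> _]; rewrite scale0r.
    rewrite big_enum_val; apply: eq_bigr => i _.
    by rewrite rowK /a enum_valP enum_valK_in.
  apply/rowP => i; rewrite mxE.
  have := indep rf Ha (subsetP Tnb _ (enum_valP i)).
  by rewrite /a enum_valP enum_valK_in.
have sub : (E <= W)%MS.
  by apply/row_subP => i; rewrite rowK; apply: HW; exact: enum_valP.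
have := mxrankS sub; move: rfE; rewrite /row_free => /eqP -> h.
exact: leq_trans h (rank_leq_row W).
Qed.

Lemma leaf (rf : row_free Dm) B : B \in Bs -> B != B0 ->
  exists x1, exists y1, [/\ x1 \in B0 :\: B, y1 \in B :\: B0, swap B0 x1 y1 \in Bs &
     forall y, y \in B :\: B0 -> swap B0 x1 y \in Bs -> y = y1].
Proof.
move=> BB nB; apply: NNPP => Hn.
pose X := B0 :\: B; pose Y := B :\: B0.
have nbr : forall x, x \in X -> exists2 y, y \in Y & swap B0 x y \in Bs.
  by move=> x xX; apply: Hmat.2.
pose f1 x := odflt x [pick y | (y \in Y) && (swap B0 x y \in Bs)].
pose f2 x := odflt x [pick y | [&& y \in Y, swap B0 x y \in Bs & y != f1 x]].
have f1P : forall x, x \in X -> f1 x \in Y /\ swap B0 x (f1 x) \in Bs.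
  move=> x xX; rewrite /f1; case: pickP => [y /andP [h1 h2] //|H0].
  by have [y yY sy] := nbr x xX; move: (H0 y); rewrite yY sy.
have f2P : forall x, x \in X -> [/\ f2 x \in Y, swap B0 x (f2 x) \in Bs & f2 x != f1 x].
  move=> x xX; rewrite /f2; case: pickP => [y /and3P [h1 h2 h3] //|H0].
  exfalso; apply: Hn; exists x, (f1 x); have [h1 h2] := f1P x xX; split => //.
  by move=> y yY sy; apply/eqP; move: (H0 y); rewrite yY sy /= => /negbFE.
have XB0 : forall x, x \in X -> x \in B0 by move=> x; rewrite inE => /andP [].
have YB0 : forall y, y \in Y -> y \notin B0 by move=> y; rewrite inE => /andP [].
pose g (bx : bool * 'I_n) := swap B0 bx.2 (if bx.1 then f1 bx.2 else f2 bx.2).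
pose Dom := setX [set: bool] X.
pose T := g @: Dom.
have gP : forall bx, bx \in Dom -> bx.2 \in X /\ (if bx.1 then f1 bx.2 else f2 bx.2) \in Y.
  move=> [b x]; rewrite inE /= => /andP [_ xX]; split => //.
  by case: b; [exact: (f1P x xX).1 | case: (f2P x xX)].
have gnb : forall bx, bx \in Dom -> g bx \in Bs.
  move=> [b x]; rewrite inE /= => /andP [_ xX]; rewrite /g /=.
  by case: b; [exact: (f1P x xX).2 | case: (f2P x xX)].
have cT : #|T| = (2 * #|X|)%N.
  rewrite card_in_imset ?cardsX ?cardsT ?card_bool //.
  move=> [b x] [b' x'] hD hD' e.
  have [xX yY] := gP _ hD; have [xX' yY'] := gP _ hD'.
  have [ex ey] := swap_inj (XB0 _ xX) (YB0 _ yY) (XB0 _ xX') (YB0 _ yY') e.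
  rewrite /= in ex ey xX; subst x'.
  case: b b' ey {hD hD' e yY yY' xX'} => [] [] //= ey.
    by have [_ _] := f2P x xX; rewrite ey eqxx.
  by have [_ _] := f2P x xX; rewrite ey eqxx.
have Tnb : T \subset nb.
  apply/subsetP => N /imsetP [bx hD ->].
  have [xX yY] := gP _ hD.
  by apply: swap_nb; [exact: XB0|exact: YB0|exact: gnb].
have [x0 x0X] := diff_ne0 BB nB.
pose U := (X :|: Y) :\ x0.
pose W := \matrix_(i < #|U|) (ee R (enum_val i) - ee R x0).
have eW : forall z, z \in X :|: Y -> (ee R z - ee R x0 <= W)%MS.
  move=> z zXY; case: (eqVneq z x0) => [->|zx]; first by rewrite subrr sub0mx.
  have zU : z \in U by rewrite in_setD1 zx zXY.
  by apply: (eq_row_sub (enum_rank_in zU z)); rewrite rowK enum_rankK_in.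
have HW : forall N, N \in T -> (chi R N - v <= W)%MS.
  move=> N /imsetP [bx hD ->].
  have [xX yY] := gP _ hD.
  rewrite /g chi_swap_v; [|exact: XB0|exact: YB0].
  have E3 : forall (a b c : 'rV[R]_n), a - b = (a - c) - (b - c).
    by move=> a b c; rewrite opprB addrA subrK.
  rewrite (E3 _ _ (ee R x0)).
  by apply: submxB; apply: eW; rewrite inE ?xX ?yY ?orbT.
have := rank_bound rf Tnb HW.
have XY0 : X :&: Y = set0.
  by apply/setP => j; rewrite !inE; case: (j \in B0); case: (j \in B).
have cU : #|X :|: Y| = (1 + #|U|)%N.
  by rewrite (cardsD1 x0 (X :|: Y)) inE x0X.
move: cU; rewrite cardsU XY0 cards0 subn0 /Y -cardD_eq // -/X cT.
by rewrite mul2n -addnn => -> ; rewrite add1n ltnn.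
Qed.

Lemma card_step (B : {set 'I_n}) x y : x \in B0 -> y \in B -> y \notin B0 ->
  #|B :\: B0| = (#|swap B y x :\: B0|).+1.
Proof.
move=> xB0 yB yB0.
have -> : swap B y x :\: B0 = (B :\: B0) :\ y.
  apply/setP => j; rewrite /swap !inE.
  case: (eqVneq j x) => [->|jx]; first by rewrite xB0 !andbF.
  by case: (j \in B0); case: (j != y).
by rewrite (cardsD1 y (B :\: B0)) !inE yB0 yB.
Qed.

Lemma chi_step (B : {set 'I_n}) x y : x \in B0 -> x \notin B -> y \in B -> y \notin B0 ->
  chi R B - v = (chi R (swap B y x) - v) + (chi R (swap B0 x y) - v).
Proof. by move=> *; rewrite chi_swap // chi_swap // /v -ident. Qed.

Lemma L0 (Q : {set {set 'I_n}}) (B : {set 'I_n}) x1 y1 : is_matroid Q -> (forall B, B \in Q -> B \in Bs) ->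
  B0 \in Q -> B \in Q -> x1 \in B0 :\: B -> y1 \in B :\: B0 ->
  (forall y, y \in B :\: B0 -> swap B0 x1 y \in Bs -> y = y1) ->
  swap B y1 x1 \in Q.
Proof.
move=> Qm Qs B0Q BQ x1in y1in uq.
have [x' x'in sQ] := Qm.2 B B0 BQ B0Q y1 y1in.
case: (eqVneq x' x1) => [<-|nx]; first exact: sQ.
have sB := Qs _ sQ.
move: x1in y1in x'in; rewrite !inE => /andP [x1B x1B0] /andP [y1B0 y1B] /andP [x'B x'B0].
have hx : x1 \in B0 :\: swap B y1 x'.
  by rewrite /swap !inE negb_or x1B0 andbT eq_sym nx /= negb_and x1B orbT.
have [y yin sy] := Hmat.2 B0 _ B0in sB x1 hx.
have := uq y; move: yin; rewrite /swap !inE => /andP [yB0 /orP [/eqP yx'|/andP [yy1 yB]]].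
  by move: yB0; rewrite yx' x'B0.
by rewrite yB0 yB => /(_ isT sy) /eqP; rewrite (negbTE yy1).
Qed.

Lemma L1 (rf : row_free Dm) (Q : {set {set 'I_n}}) : is_matroid Q ->
  (forall B, B \in Q -> B \in Bs) -> B0 \in Q ->
  forall B, B \in Q -> inspan Q (chi R B - v).
Proof.
move=> Qm Qs B0Q.
have : forall k B, (#|B :\: B0| <= k)%N -> B \in Q -> inspan Q (chi R B - v).
  elim => [|k IH] B1 hk BQ.
    have -> : B1 = B0.
      apply/eqP; case: (eqVneq B1 B0) => // nB.
      have [x xin] := diff_ne0 (Qs _ BQ) nB.
      by move: hk; rewrite -(cardD_eq (Qs _ BQ)) leqn0 cards_eq0 => /eqP e; move: xin; rewrite e inE.
    by rewrite subrr; exact: inspan0.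
  case: (eqVneq B1 B0) => [->|nB]; first by rewrite subrr; exact: inspan0.
  have [x1 [y1 [x1in y1in s1 uq]]] := leaf rf (Qs _ BQ) nB.
  have [y yin sy] := Qm.2 B0 B1 B0Q BQ x1 x1in.
  have ey := uq y yin (Qs _ sy); subst y.
  have s2 := L0 Qm Qs B0Q BQ x1in y1in uq.
  move: x1in y1in; rewrite !inE => /andP [x1B x1B0] /andP [y1B0 y1B].
  rewrite (chi_step x1B0 x1B y1B y1B0); apply: inspanD.
    apply: IH => //; move: hk; rewrite (card_step x1B0 y1B y1B0).
    by [].
  by apply: inspan_nb => //; apply: swap_nb.
by move=> H B BQ; apply: (H _ B (leqnn _) BQ).
Qed.

Lemma L2 (rf : row_free Dm) (Q : {set {set 'I_n}}) : is_matroid Q ->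
  (forall B, B \in Q -> B \in Bs) -> B0 \in Q -> (forall N, N \in nb -> N \in Q) ->
  forall B, B \in Bs -> B \in Q.
Proof.
move=> Qm Qs B0Q nbQ.
have : forall k B, (#|B :\: B0| <= k)%N -> B \in Bs -> B \in Q.
  elim => [|k IH] B1 hk BB.
    have -> : B1 = B0.
      apply/eqP; case: (eqVneq B1 B0) => // nB.
      have [x xin] := diff_ne0 BB nB.
      by move: hk; rewrite -(cardD_eq BB) leqn0 cards_eq0 => /eqP e; move: xin; rewrite e inE.
    exact: B0Q.
  case: (eqVneq B1 B0) => [->|nB] //.
  have [x1 [y1 [x1in y1in s1 uq]]] := leaf rf BB nB.
  have s2 := L0 Hmat (fun B h => h) B0in BB x1in y1in uq.
  have N1Q : swap B0 x1 y1 \in Q.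
    apply: nbQ; apply: swap_nb => //; [by move: x1in; rewrite inE => /andP []|].
    by move: y1in; rewrite inE => /andP [].
  move: (x1in) (y1in); rewrite !inE => /andP [x1B x1B0] /andP [y1B0 y1B].
  have B2Q : swap B1 y1 x1 \in Q.
    apply: IH => //; move: hk; rewrite (card_step x1B0 y1B y1B0).
    by [].
  have y1x1 : y1 != x1 by apply: contraNneq y1B0 => ->.
  have hx : x1 \in swap B1 y1 x1 :\: swap B0 x1 y1.
    by rewrite /swap !inE eqxx /= eq_sym (negbTE y1x1).
  have [y yin sQ] := Qm.2 _ _ B2Q N1Q x1 hx.
  move: yin; rewrite /swap !inE => /andP [yN yS].
  case: (eqVneq y y1) => [ey|ny].
    subst y.
    have eB : swap (swap B1 y1 x1) x1 y1 = B1.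
      apply/setP => j; rewrite /swap !inE.
      case: (eqVneq j y1) => [->|jy1]; first by rewrite y1B.
      case: (eqVneq j x1) => [->|jx1] /=; first by rewrite (negbTE x1B).
      by [].
    by rewrite -eB.
  move: yN yS; rewrite ny /= negb_or => /andP [yx1 yB1] yB0.
  rewrite (negbTE ny) yx1 /= in yB0.
  have sB := Qs _ sQ.
  have hx' : x1 \in B0 :\: swap (swap B1 y1 x1) x1 y.
    by rewrite /swap !inE x1B0 eqxx andbT /= eq_sym (negbTE yx1).
  have [y' y'in sy'] := Hmat.2 B0 _ B0in sB x1 hx'.
  move: y'in; rewrite /swap !inE => /andP [y'B0 /orP [/eqP ey'|/andP [_ /orP [/eqP ex|/andP [y'y1 y'B1]]]]].
    by move: y'B0; rewrite ey' yB0.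
    by move: y'B0; rewrite ex x1B0.
  have := uq y'; rewrite !inE y'B0 y'B1 => /(_ isT sy') ey.
  by move: y'y1; rewrite ey eqxx.
by move=> H B BB; apply: (H _ B (leqnn _) BB).
Qed.

Lemma conv_sub (lam : {set 'I_n} -> R) : \sum_B lam B = 1 ->
  \sum_B lam B *: chi R B - v = \sum_B lam B *: (chi R B - v).
Proof.
move=> l1; rewrite [RHS](eq_bigr (fun B => lam B *: chi R B - lam B *: v)); last first.
  by move=> B _; rewrite scalerBr.
by rewrite sumrB -scaler_suml l1 scale1r.
Qed.

Definition fo (z : 'rV[R]_n) : R := \sum_(j in ~: B0) z 0 j.

Lemma fo_chi B : fo (chi R B) = (#|B :\: B0|)%:R.
Proof.
rewrite /fo (eq_bigr (fun j => if j \in B then 1 else 0)); last by move=> j _; rewrite mxE.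
rewrite -big_mkcondr /= (eq_bigl (fun j => j \in B :\: B0)); last first.
  by move=> j; rewrite !inE andbC.
by rewrite sumr_const.
Qed.

Lemma fo_sum (lam : {set 'I_n} -> R) :
  fo (\sum_B lam B *: chi R B) = \sum_B lam B * fo (chi R B).
Proof.
rewrite /fo (eq_bigr (fun j => \sum_B lam B * chi R B 0 j)); last first.
  by move=> j _; rewrite summxE; apply: eq_bigr => B _; rewrite mxE.
by rewrite exchange_big; apply: eq_bigr => B _; rewrite mulr_sumr.
Qed.

Lemma main_contra (aff : aff_indep_pts (base_polytope R Bs) #|nb|) t
  (Ms : 'I_t -> {set {set 'I_n}}) :
  (forall i, is_matroid (Ms i)) ->
  (forall x, base_polytope R Bs x <-> exists i, base_polytope R (Ms i) x) ->
  (forall i, ~ (forall x, base_polytope R (Ms i) x <-> base_polytope R Bs x)) -> False.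
Proof.
move=> Mm Hcov Hprop.
have rf := Dm_free aff.
set d := #|nb|.
pose eps : R := (d.*2.+1)%:R^-1.
have eps0 : 0 < eps by rewrite invr_gt0 ltr0n.
have deps : d%:R * eps <= 1.
  rewrite ler_pdivrMr ?ltr0n // mul1r ler_nat -addnn.
  exact: leq_trans (leq_addr d d) (leqnSn _).
have deps2 : (d.*2)%:R * eps < 1.
  by rewrite ltr_pdivrMr ?ltr0n // mul1r ltr_nat.
have B0nb : B0 \notin nb.
  by rewrite inE negb_and /symdiff setDv setU0 cards0 orbT.
pose lam B := if B == B0 then 1 - d%:R * eps else if B \in nb then eps else 0.
have sumV : forall F : {set 'I_n} -> 'rV[R]_n,
    \sum_B lam B *: F B = (1 - d%:R * eps) *: F B0 + \sum_(N in nb) eps *: F N.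
  move=> F; rewrite (bigD1 B0) //= /lam eqxx; congr (_ + _).
  rewrite (eq_bigr (fun B => if B \in nb then eps *: F B else 0)); last first.
    by move=> B /negbTE ->; case: ifP => // _; rewrite scale0r.
  rewrite -big_mkcondr /=; apply: eq_bigl => B.
  by case: (boolP (B \in nb)) => [h|]; rewrite ?andbT ?andbF //; apply: contraNneq B0nb => <-.
have sumR : forall F : {set 'I_n} -> R,
    \sum_B lam B * F B = (1 - d%:R * eps) * F B0 + \sum_(N in nb) eps * F N.
  move=> F; rewrite (bigD1 B0) //= /lam eqxx; congr (_ + _).
  rewrite (eq_bigr (fun B => if B \in nb then eps * F B else 0)); last first.
    by move=> B /negbTE ->; case: ifP => // _; rewrite mul0r.
  rewrite -big_mkcondr /=; apply: eq_bigl => B.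
  by case: (boolP (B \in nb)) => [h|]; rewrite ?andbT ?andbF //; apply: contraNneq B0nb => <-.
have l1 : \sum_B lam B = 1.
  have h := sumR (fun _ => 1).
  rewrite [LHS](eq_bigr (fun B => lam B * 1)); last by move=> B _; rewrite mulr1.
  rewrite h mulr1.
  rewrite mulr1.
  by rewrite sumr_const mulr_natl subrK.
pose p := \sum_B lam B *: chi R B.
have pP : base_polytope R Bs p.
  exists lam; split => //.
  - move=> B; rewrite /lam; case: eqP => _; first by rewrite subr_ge0.
    by case: ifP => _ //; exact: ltW.
  - move=> B nB; rewrite /lam; case: eqP => [eB|_]; first by move: nB; rewrite eB B0in.
    by case: ifP => // /setIdP [h _]; move: nB; rewrite h.
have pv : p - v = \sum_(N in nb) eps *: (chi R N - v).
  by rewrite /p conv_sub // sumV /v subrr scaler0 add0r.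
have [i pQ] := (Hcov p).1 pP.
pose Q := Ms i.
have Qs : forall B, B \in Q -> B \in Bs.
  move=> B BQ; apply: chi_in_poly; apply/Hcov; exists i.
  exists (fun B' => (B' == B)%:R); split.
  - by move=> B'; rewrite ler0n.
  - by move=> B' nB; case: eqP => // e; move: nB; rewrite e BQ.
  - by rewrite (bigD1 B) //= eqxx big1 ?addr0 // => B' /negbTE ->.
  - by rewrite (bigD1 B) //= eqxx scale1r big1 ?addr0 // => B' /negbTE ->; rewrite scale0r.
have [mu [m0 mQ m1 pe]] := pQ.
have B0Q : B0 \in Q.
  have up : fo p <= (d.*2)%:R * eps.
    rewrite /p fo_sum sumR fo_chi setDv cards0 mulr0 add0r.
    apply: le_trans (_ : \sum_(N in nb) eps * 2%:R <= _).
      apply: ler_sum => N Nnb; apply: ler_wpM2l; first exact: ltW.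
      rewrite fo_chi ler_nat; move: Nnb; rewrite inE => /andP [_ /eqP <-].
      by apply: subset_leq_card; apply/subsetP => j; rewrite /symdiff !inE => /andP [-> ->]; rewrite orbT.
    by rewrite sumr_const -(mulr_natr (eps * 2)) -mulrA -natrM mul2n mulrC.
  have lo : 1 - mu B0 <= fo p.
    rewrite pe fo_sum.
    apply: le_trans (_ : \sum_B (if B == B0 then 0 else mu B) <= _).
      rewrite -m1 (bigD1 B0) //= [X in _ <= X](bigD1 B0) //= eqxx add0r addrAC subrr add0r.
      by apply: ler_sum => B /negbTE ->.
    apply: ler_sum => B _; case: eqP => [->|nB].
      by rewrite fo_chi setDv cards0 mulr0.
    case: (boolP (B \in Bs)) => BB.
      apply: ler_peMr => //; rewrite fo_chi ler1n -(cardD_eq BB) card_gt0.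
      have [x xin] := diff_ne0 BB (introN eqP nB).
      by apply/set0Pn; exists x.
    have nBQ : B \notin Q by apply: contraNN BB; exact: Qs.
    by rewrite mQ // mul0r.
  have : 0 < mu B0.
    by have := le_lt_trans lo (le_lt_trans up deps2); rewrite ltrBlDr ltrDl.
  rewrite lt_def => /andP [h _]; apply/negPn/negP => nQ.
  by move: h; rewrite mQ // eqxx.
have nbQ : forall N, N \in nb -> N \in Q.
  have : inspan Q (p - v).
    rewrite pe conv_sub //; apply: inspan_sum => B.
    case: (boolP (B \in Q)) => BQ.
      by apply: inspanZ; apply: L1 => //; exact: Mm.
    by rewrite mQ // scale0r; exact: inspan0.
  case=> a [aQ ea].
  have H0 : \sum_(N in nb) (eps - a N) *: (chi R N - v) = 0.
    rewrite (eq_bigr (fun N => eps *: (chi R N - v) - a N *: (chi R N - v))); last first.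
      by move=> N _; rewrite scalerBl.
    by rewrite sumrB -pv {1}ea subrr.
  move=> N Nnb; apply/negPn/negP => NQ.
  have := indep rf H0 Nnb; rewrite aQ // subr0 => e0.
  by move: eps0; rewrite e0 ltxx.
have allQ := L2 rf (Mm i) Qs B0Q nbQ.
have eQ : Q = Bs by apply/setP => B; apply/idP/idP; [exact: Qs|exact: allQ].
by apply: (Hprop i) => x; rewrite -/Q eQ.
Qed.


End Main.

End Helpers.
Import Helpers.
Unset Implicit Arguments.
Close Scope ring_scope.

Theorem corollary6 (R : realFieldType) (n : nat) (Bs : {set {set 'I_n}}) (d : nat) :
  is_matroid Bs -> binary Bs ->
  poly_dim (base_polytope R Bs) d ->
  (exists2 B, B \in Bs & base_graph_degree Bs B = d) ->
  indecomposable R Bs.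
Proof.
move=> Hmat [m [A HA]] [aff _] [B0 B0in deg] [t [Ms [t2 Mm Hcov Hprop _]]].
have Hbin : forall B, B \in Bs <-> bbase A B by move=> B; exact: HA.
rewrite -deg in aff.
exact: (main_contra Hmat Hbin B0in aff Mm Hcov Hprop).
Qed.
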